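(* Let $\mathcal X=(\Omega,S)$ be a scheme with $n=|\Omega|$ such that $4c(m-1)<n$, where $c=c(\mathcal X)$ and $m=n_{\max}$. Then for every $\alpha\in\Omega$ the coherent configuration $\mathcal X_\alpha$ is $1$-regular. In particular, $b(\mathcal X)\le 2$.
   Context: A coherent configuration on a finite set $\Omega$ is $(\Omega,S)$ with $S$ a partition of $\Omega\times\Omega$ such that $1_\Omega$ is a union of elements of $S$, $s^*=\{(\beta,\alpha):(\alpha,\beta)\in s\}\in S$, and for $r,s,t\in S$ the number $|\{\gamma:(\alpha,\gamma)\in r,(\gamma,\beta)\in s\}|$ is independent of $(\alpha,\beta)\in t$; it is a scheme if $1_\Omega\in S$. Valency of $r\in S$ in a scheme: $n_r=|\{\beta:(\alpha,\beta)\in r\}|$ (independent of $\alpha$); $n_{\max}=\max_{r\in S}n_r$. For $\alpha,\beta\in\Omega$, $r(\alpha,\beta)$ is the element of $S$ containing $(\alpha,\beta)$. For $s\in S$ and $(\alpha,\beta)\in s$, the indistinguishing number $c(s)=|\{\gamma\in\Omega: r(\alpha,\gamma)=r(\beta,\gamma)\}|$ (independent of the choice of $(\alpha,\beta)$); $c(\mathcal X)$ is the maximum of $c(s)$ over $s\in S$, $s\ne 1_\Omega$. Fibers: sets $\Gamma$ with $1_\Gamma\in S$. Fission: configuration on $\Omega$ whose relations (unions of basic relations) include those of $\mathcal X$; complete: all basic relations singletons. $\mathcal X_\alpha$ is the smallest fission in which $\{\alpha\}$ is a fiber. A coherent configuration $(\Omega,T)$ is $1$-regular if some point $\gamma$ satisfies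 $|\{\delta:(\gamma,\delta)\in t\}|\le1$ for all $t\in T$. A set $B$ is a base if the smallest fission in which all $\{\beta\}$, $\beta\in B$, are fibers is complete; $b(\mathcal X)$ is the minimal size of a base. *)

(* Defs.v *)
From mathcomp Require Import all_boot all_order.
Set Implicit Arguments. Unset Strict Implicit. Unset Printing Implicit Defensive.

Section CC.
Variable Omega : finType.
Notation rel2 := {set (Omega * Omega)}.

Definition diag_on (G : {set Omega}) : rel2 := [set (x, x) | x in G].
Definition diag : rel2 := diag_on [set: Omega].

Definition is_union (S : {set rel2}) (A : rel2) : Prop :=
  exists U : {set rel2}, U \subset S /\ cover U = A.

Definition transp (s : rel2) : rel2 := [set (x.2, x.1) | x in s].

Definition inter_count (r s : rel2) (a b : Omega) : nat :=
  #|[set g | ((a, g) \in r) && ((g, b) \in s)]|.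

Definition is_cc (S : {set rel2}) : Prop :=
  [/\ partition S [set: Omega * Omega],
      is_union S diag,
      (forall s, s \in S -> transp s \in S) &
      (forall r s t, r \in S -> s \in S -> t \in S ->
        forall p q, p \in t -> q \in t ->
          inter_count r s p.1 p.2 = inter_count r s q.1 q.2)].

Definition is_scheme (S : {set rel2}) : Prop := is_cc S /\ diag \in S.

Definition rel_of (S : {set rel2}) (a b : Omega) : rel2 := pblock S (a, b).

(* valency of r at alpha; in a scheme independent of alpha *)
Definition valency (r : rel2) (a : Omega) : nat := #|[set b | (a, b) \in r]|.
Definition nmax (S : {set rel2}) : nat := \max_(r in S) \max_(a : Omega) valency r a.

(* indistinguishing number of a pair; c(s) is its common value on s *)
Definition indist (S : {set rel2}) (a b : Omega) : nat :=
  #|[set g | rel_of S a g == rel_of S b g]|.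
Definition c_rel (S : {set rel2}) (s : rel2) : nat := \max_(p in s) indist S p.1 p.2.
Definition cX (S : {set rel2}) : nat := \max_(s in S | s != diag) c_rel S s.

Definition fission (S T : {set rel2}) : Prop :=
  is_cc T /\ forall s, s \in S -> is_union T s.

Definition complete (T : {set rel2}) : Prop := forall t, t \in T -> #|t| = 1.

Definition is_fiber (T : {set rel2}) (G : {set Omega}) : Prop := diag_on G \in T.

Definition smallest_fission (S : {set rel2}) (P : {set rel2} -> Prop)
    (T : {set rel2}) : Prop :=
  [/\ fission S T, P T &
      forall T', fission S T' -> P T' -> fission T T'].

Definition point_ext (S : {set rel2}) (a : Omega) (T : {set rel2}) : Prop :=
  smallest_fission S (fun T => is_fiber T [set a]) T.

Definition one_regular (T : {set rel2}) : Prop :=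
  exists g : Omega, forall t, t \in T -> #|[set d | (g, d) \in t]| <= 1.

Definition is_base (S : {set rel2}) (B : {set Omega}) : Prop :=
  forall T, smallest_fission S (fun T => forall b, b \in B -> is_fiber T [set b]) T ->
    complete T.

End CC.

(* Main.v *)
Require Import Defs.
From mathcomp Require Import all_boot all_order.
From mathcomp Require Import zify.
Set Implicit Arguments. Unset Strict Implicit. Unset Printing Implicit Defensive.

Section Aux.
Variable Omega : finType.
Notation rel2 := {set (Omega * Omega)}.
Implicit Types (T S : {set rel2}).

Lemma pb_in T p : is_cc T -> p \in pblock T p.
Proof. by case=> /and3P[/eqP cT _ _] _ _ _; rewrite mem_pblock cT inE. Qed.

Lemma pb_mem T p : is_cc T -> pblock T p \in T.
Proof. by case=> /and3P[/eqP cT _ _] _ _ _; apply: pblock_mem; rewrite cT inE. Qed.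

Lemma pb_def T t p : is_cc T -> t \in T -> p \in t -> pblock T p = t.
Proof. by case=> /and3P[_ tI _] _ _ _; apply: def_pblock. Qed.

Lemma pb_same T p q : is_cc T -> q \in pblock T p -> pblock T q = pblock T p.
Proof. by move=> cc H; apply: pb_def => //; apply: pb_mem. Qed.

Lemma coh T r s p q : is_cc T -> r \in T -> s \in T ->
  pblock T p = pblock T q -> inter_count r s p.1 p.2 = inter_count r s q.1 q.2.
Proof.
move=> cc rT sT E; have := cc; case=> _ _ _ H.
apply: (H r s (pblock T p)) => //; first exact: pb_mem.
  exact: pb_in.
by rewrite E; apply: pb_in.
Qed.

Lemma refine S T p q : is_cc S -> is_cc T -> (forall s, s \in S -> is_union T s) ->
  pblock T p = pblock T q -> pblock S p = pblock S q.
Proof.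
move=> cS cT U E.
have [V [VT cV]] := U _ (pb_mem p cS).
have : p \in cover V by rewrite cV; apply: pb_in.
case/bigcupP=> u uV pu.
have uT : u \in T by apply: (subsetP VT).
have Tu : pblock T p = u by apply: pb_def.
have qu : q \in u by rewrite -Tu E; apply: pb_in.
have : q \in cover V by apply/bigcupP; exists u.
by rewrite cV => /(pb_same cS) ->.
Qed.

Lemma transp_pb S a b a' b' : is_cc S ->
  pblock S (a, b) = pblock S (a', b') -> pblock S (b, a) = pblock S (b', a').
Proof.
move=> cS E; have := cS; case=> _ _ tr _.
have tS := tr _ (pb_mem (a, b) cS).
have h1 : (b, a) \in transp (pblock S (a, b)).
  by apply/imsetP; exists (a, b) => //; apply: pb_in.
have h2 : (b', a') \in transp (pblock S (a, b)).
  by apply/imsetP; exists (a', b') => //; rewrite E; apply: pb_in.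
by rewrite (pb_def cS tS h1) (pb_def cS tS h2).
Qed.

Lemma in_diag1 (z x y : Omega) : ((x, y) \in diag_on [set z]) = (x == z) && (y == z).
Proof.
apply/imsetP/andP => [[w]|[/eqP-> /eqP->]]; last by exists z; rewrite ?inE.
by rewrite inE => /eqP -> [-> ->].
Qed.

Lemma fiberL T z p p' y : is_cc T -> diag_on [set z] \in T ->
  pblock T (p, z) = pblock T (p', y) -> y = z.
Proof.
move=> cT Dz E.
have bT := pb_mem (p, z) cT.
have := coh cT bT Dz E; rewrite /inter_count /=.
have -> : [set g | ((p, g) \in pblock T (p, z)) && ((g, z) \in diag_on [set z])] = [set z].
  apply/setP => g; rewrite !inE in_diag1 eqxx andbT.
  by case: eqP => [->|]; rewrite ?andbF ?andbT //; apply: pb_in.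
rewrite cards1 => /esym/eqP; case/cards1P => g /setP /(_ g); rewrite !inE eqxx.
by case/andP => _; rewrite in_diag1 => /andP[_ /eqP].
Qed.

Lemma lemL T g d d' x : is_cc T ->
  pblock T (g, d) = pblock T (g, d') ->
  (forall y, pblock T (g, y) = pblock T (g, x) -> y = x) ->
  pblock T (x, d) = pblock T (x, d').
Proof.
move=> cT E R.
have := coh cT (pb_mem (g, x) cT) (pb_mem (x, d) cT) E.
rewrite /inter_count /= => H.
have : 0 < #|[set y | ((g, y) \in pblock T (g, x)) && ((y, d') \in pblock T (x, d))]|.
  rewrite -H; apply/card_gt0P; exists x; rewrite inE !pb_in //.
case/card_gt0P => y; rewrite inE => /andP[h1 h2].
have yx : y = x by apply: R; apply: pb_same.
by subst y; rewrite (pb_same cT h2).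
Qed.

Lemma in_diag (x y : Omega) : ((x, y) \in diag Omega) = (x == y).
Proof.
apply/imsetP/eqP => [[w _ [-> ->]] //|->]; by exists y.
Qed.

Lemma indist_le S d d' : is_cc S -> d != d' -> indist S d d' <= cX S.
Proof.
move=> cS ne.
have sS := pb_mem (d, d') cS.
have nd : pblock S (d, d') != diag Omega.
  apply/eqP => E; have := pb_in (d, d') cS; rewrite E in_diag; exact/negP.
have h1 : indist S d d' <= c_rel S (pblock S (d, d')).
  rewrite /c_rel; exact: (leq_bigmax_cond (d, d') (pb_in (d, d') cS)).
apply: leq_trans h1 _; rewrite /cX.
exact: (leq_bigmax_cond (pblock S (d, d')) (introT andP (conj sS nd))).
Qed.

Definition good S (a g : Omega) : {set Omega} :=
  [set x | [forall y, ((rel_of S a y == rel_of S a x) && (rel_of S y g == rel_of S x g)) ==> (y == x)]].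

Lemma regular S T a g : is_cc S -> is_cc T -> (forall s, s \in S -> is_union T s) ->
  diag_on [set a] \in T -> cX S < #|good S a g| ->
  forall t, t \in T -> #|[set d | (g, d) \in t]| <= 1.
Proof.
move=> cS cT U Da big t tT; apply/card_le1_eqP => d d'; rewrite !inE => h h'.
have E : pblock T (g, d) = pblock T (g, d') by rewrite (pb_def cT tT h) (pb_def cT tT h').
apply/eqP; apply: contraLR big => ne; rewrite -leqNgt.
apply: leq_trans (indist_le cS ne); apply: subset_leq_card; apply/subsetP => x.
rewrite !inE => /forallP gx.
have Ra : forall y, pblock T (g, y) = pblock T (g, a) -> y = a.
  by move=> y /esym; apply: fiberL.
have Rx : forall y, pblock T (g, y) = pblock T (g, x) -> y = x.
  move=> y Ey; apply/eqP; have /implyP := gx y; apply.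
  rewrite /rel_of; have := lemL cT Ey Ra => /(refine cS cT U) ->; rewrite eqxx /=.
  by rewrite /rel_of (transp_pb cS (refine cS cT U Ey)) eqxx.
by rewrite /rel_of; have := lemL cT E Rx => /(refine cS cT U) /(transp_pb cS) ->.
Qed.

Lemma complete_of T g : is_cc T -> diag_on [set g] \in T ->
  (forall t, t \in T -> #|[set d | (g, d) \in t]| <= 1) -> complete T.
Proof.
move=> cT Dg R t tT.
have := cT; case=> /and3P[_ _ t0] _ tr _.
have : t != set0 by apply: contraNneq t0 => <-.
case/set0Pn => [[p q]] pq.
apply/eqP/cards1P; exists (p, q); apply/setP => [[p' q']]; rewrite inE.
apply/idP/eqP => [pq'|[-> ->] //].
have E : pblock T (p, q) = pblock T (p', q') by rewrite (pb_def cT tT pq) (pb_def cT tT pq').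
have := coh cT (pb_mem (p, g) cT) (pb_mem (g, q) cT) E; rewrite /inter_count /= => H.
have : 0 < #|[set y | ((p', y) \in pblock T (p, g)) && ((y, q') \in pblock T (g, q))]|.
  rewrite -H; apply/card_gt0P; exists g; rewrite inE !pb_in //.
case/card_gt0P => y; rewrite inE => /andP[h1 h2].
have yg : y = g by apply: (fiberL (p:=p) (p':=p') cT Dg); rewrite (pb_same cT h1).
subst y.
have qq : q' = q.
  have cq := pb_mem (g, q) cT.
  by have /card_le1_eqP := R _ cq; apply; rewrite inE ?pb_in.
have pp : p' = p.
  have cq := tr _ (pb_mem (p, g) cT).
  have /card_le1_eqP := R _ cq; apply; rewrite inE; apply/imsetP.
    by exists (p, g) => //; apply: pb_in.
  by exists (p', g).
by rewrite qq pp.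
Qed.

Lemma val_le S a x : is_cc S ->
  #|[set y | rel_of S a y == rel_of S a x]| <= nmax S.
Proof.
move=> cS.
have h : #|[set y | rel_of S a y == rel_of S a x]| <= valency (pblock S (a, x)) a.
  apply: subset_leq_card; apply/subsetP => y; rewrite !inE /rel_of => /eqP <-.
  exact: pb_in.
apply: leq_trans h _; rewrite /nmax.
apply: leq_trans (leq_bigmax a) _.
exact: (leq_bigmax_cond (F := fun r => \max_(a0 : Omega) valency r a0) (pblock S (a, x)) (pb_mem _ cS)).
Qed.

Lemma count_good S a : is_cc S -> cX S + cX S * (nmax S - 1) < #|Omega| ->
  exists g, cX S < #|good S a g|.
Proof.
move=> cS hyp.
set c := cX S; set m := nmax S.
pose f g x y : bool := [&& (y != x), (rel_of S a y == rel_of S a x) & (rel_of S y g == rel_of S x g)].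
have A : forall g, #|~: good S a g| <= \sum_x \sum_y (f g x y : nat).
  move=> g; rewrite -sum1_card big_mkcond /=; apply: leq_sum => x _.
  case: ifP => // xb; move: xb; rewrite !inE negb_forall => /existsP[y].
  rewrite negb_imply => /andP[/andP[h1 h2] h3].
  rewrite (bigD1 y) //= /f h3 h1 h2 /=; exact: leq_addr.
have B : \sum_g \sum_x \sum_y (f g x y : nat) <= #|Omega| * (c * (m - 1)).
  rewrite exchange_big /=.
  rewrite -sum_nat_const; apply: leq_sum => x _.
  rewrite exchange_big /=.
  pose b y := (y != x) && (rel_of S a y == rel_of S a x).
  apply: (@leq_trans (\sum_y (if b y then c else 0))).
    apply: leq_sum => y _; rewrite /b /f.
    case: (eqVneq y x) => [_|yx]; first by rewrite /= big1.
    case: (eqVneq (rel_of S a y) (rel_of S a x)) => [_|_]; last by rewrite /= big1 // => g; rewrite andbF.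
    rewrite /=.
    have -> : \sum_g ((rel_of S y g == rel_of S x g) : nat) = indist S x y.
      rewrite /indist -sum1_card [RHS]big_mkcond /=; apply: eq_bigr => g _.
      by rewrite inE eq_sym; case: (_ == _).
    by apply: indist_le => //; rewrite eq_sym.
  rewrite -big_mkcond /= sum_nat_const mulnC leq_mul2l; apply/orP; right.
  have := val_le a x cS; rewrite (cardsD1 x) inE eqxx /= add1n.
  move=> h; apply: leq_trans _ (leq_sub2r 1 h); rewrite subn1 /=.
  apply: subset_leq_card; apply/subsetP => y; rewrite !inE /b => /andP[-> ->] //.
case: (pickP (fun g => c < #|good S a g|)) => [g Hg|H]; first by exists g.
have C : #|Omega| * (#|Omega| - c) <= #|Omega| * (c * (m - 1)).
  apply: leq_trans B; rewrite -sum_nat_const; apply: leq_sum => g _.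
  apply: leq_trans (A g); rewrite cardsCs setCK.
  by apply: leq_sub2l; rewrite leqNgt H.
move: C hyp; set n := #|Omega|; set k := c * (m - 1) => C hyp.
have n0 : 0 < n by apply: leq_ltn_trans hyp.
rewrite leq_mul2l gtn_eqF //= in C.
lia.
Qed.

Lemma cX_lt S : is_scheme S -> cX S < #|Omega| \/ #|Omega| = 0.
Proof.
case=> cS dS.
case: (posnP #|Omega|) => [->|n0]; [by right | left].
rewrite -(prednK n0) ltnS; apply/bigmax_leqP => s /andP[sS nd].
apply/bigmax_leqP => [[x y]] /= ps.
have xy : x != y.
  apply: contra nd => /eqP exy; subst y; apply/eqP.
  by rewrite -(pb_def cS sS ps) (pb_def cS dS) // in_diag.
have h : #|[set g | rel_of S x g == rel_of S y g]| <= #|[set: Omega] :\ x|.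
  apply: subset_leq_card; apply/subsetP => g; rewrite !inE andbT.
  apply: contraTneq => -> ; apply/negP => /eqP E.
  rewrite /rel_of in E; have : (y, x) \in pblock S (x, x) by rewrite E pb_in.
  by rewrite (pb_def cS dS (_ : (x, x) \in diag Omega)) ?in_diag ?eqxx // eq_sym (negbTE xy).
apply: leq_trans h _; have := cardsD1 x [set: Omega]; rewrite inE cardsT add1n => ->.
by [].
Qed.

End Aux.

Unset Implicit Arguments.

Theorem theorem8p1 (Omega : finType) (S : {set {set (Omega * Omega)}}) :
  is_scheme S ->
  4 * cX S * (nmax S - 1) < #|Omega| ->
  (forall (a : Omega) (T : {set {set (Omega * Omega)}}), point_ext S a T -> one_regular T) /\
  (exists B : {set Omega}, is_base S B /\ #|B| <= 2).
Proof.
move=> sch hyp.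
have cS := sch.1.
have hyp' : cX S + cX S * (nmax S - 1) < #|Omega|.
  case: (cX_lt sch) => h; last by rewrite h in hyp.
  move: h hyp; set c := cX S; set k := nmax S - 1; set n := #|Omega| => h hyp.
  case: k hyp => [|k] hyp; first by rewrite muln0 addn0.
  nia.
split.
  move=> a T [[cT U] Fa _].
  have [g Hg] := count_good a cS hyp'.
  by exists g; apply: (regular cS cT U Fa Hg).
have n0 : 0 < #|Omega| by apply: leq_ltn_trans hyp.
have [a _] := card_gt0P n0.
have [g Hg] := count_good a cS hyp'.
exists [set a; g]; split; last by rewrite cards2; case: (a != g).
move=> T [[cT U] Fb _].
have Fa := Fb a (setU11 _ _).
have Fg := Fb g (setU1r _ (set11 _)).
exact: (complete_of cT Fg (regular cS cT U Fa Hg)).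
Qed.
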